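(* Let $z_1 = 0$, $z_2=1/3$, $z_3 = -1/3$. For every $\varepsilon > 0$ there exist $T>0$ and $h \in \mathcal{H}$ such that \[ \begin{aligned} z_1-\varepsilon \leq \gamma^{z_3}_h(T)&< \gamma^{z_2}_h(T) \leq z_1+\varepsilon, \\ z_2-\varepsilon \leq \gamma^{z_1}_h(3T)&< \gamma^{z_3}_h(3T)+1 \leq z_2+\varepsilon, \\ z_3-\varepsilon \leq \gamma^{z_2}_h(5T)-1&< \gamma^{z_1}_h(5T) \leq z_3+\varepsilon. \end{aligned} \]
   Context: $\mathcal H$ is the space of piecewise constant compactly supported functions $h=(h_1,h_{-1}):\mathbb{R}^+\to\mathbb{R}^2$. For fixed $\sigma>0$ and $x\in\mathbb{R}$, $\gamma^x_h$ is the real-valued solution of $\frac{\mathrm{d}\gamma^x_h}{\mathrm{d}t}=c+\sigma^2\big(\mathfrak a(\gamma^x_h)-\tfrac12\sum_{k\in\mathbb{Z}}\mathfrak b_k'(\gamma^x_h)\mathfrak b_k(\gamma^x_h)\big)+\sigma\big(\mathfrak b_1(\gamma^x_h)h_1+\mathfrak b_{-1}(\gamma^x_h)h_{-1}\big)$, $\gamma^x_h(0)=x$. Here, for a traveling pulse $u^*$ (speed $c$) of $\mathrm{d}u=Au\,\mathrm{d}t+f(u)\,\mathrm{d}t$ on $\mathcal X=H^{s,p}(\mathbb{R};\mathbb{R}^n)$, with $\mathcal T_xf=f(\cdot-x)$, isochron map $\pi_{\mathrm{iso}}$ (upright $\pi$ in the paper, not the circle constant; defined by $\lim_{t\to\infty}\|u^v(t)-u^*(\cdot-ct-\pi_{\mathrm{iso}}(v))\|_{\mathcal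 X}=0$), basis $e_k(x)=\sqrt2\cos(2\pi kx)$ ($k>0$), $e_0=1$, $e_k(x)=\sqrt2\sin(2\pi kx)$ ($k<0$), coefficients $\alpha_k$, nonlinearity $g$: $\mathfrak a(x)=\tfrac12\sum_k\alpha_k^2\big(\pi_{\mathrm{iso}}'(\mathcal T_xu^* )[g'(\mathcal T_xu^* )g(\mathcal T_xu^* )e_k^2]+\pi_{\mathrm{iso}}''(\mathcal T_xu^* )[g(\mathcal T_xu^* )e_k,g(\mathcal T_xu^* )e_k]\big)$, $\mathfrak b_k(x)=\alpha_k\pi_{\mathrm{iso}}'(\mathcal T_xu^* )[g(\mathcal T_xu^* )e_k]$; these are smooth, 1-periodic, and $\mathrm{span}\{\mathfrak b_1,\mathfrak b_{-1}\}=\{L\sin(2\pi\cdot+\eta):L,\eta\in\mathbb{R}\}$. (The same statement holds for the drift-free control ODE $\frac{\mathrm{d}\tilde\gamma^x_h}{\mathrm{d}t}=\sigma(\mathfrak b_1(\tilde\gamma^x_h)h_1+\mathfrak b_{-1}(\tilde\gamma^x_h)h_{-1})$, and the present lemma transfers it perturbatively.) *)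

(* Defs.v *)
From Stdlib Require Import Reals Lra ZArith.
From Coquelicot Require Import Coquelicot.
Open Scope R_scope.

Definition smooth (f : R -> R) : Prop := forall (n : nat) (x : R), ex_derive_n f n x.

Definition periodic1 (f : R -> R) : Prop := forall x : R, f (x + 1) = f x.

Definition summable_Z (u : Z -> R) : Prop :=
  ex_series (fun n : nat => Rabs (u (Z.of_nat n))) /\
  ex_series (fun n : nat => Rabs (u (- (Z.of_nat n + 1))%Z)).

Definition sum_Z (u : Z -> R) : R :=
  Series (fun n : nat => u (Z.of_nat n)) + Series (fun n : nat => u (- (Z.of_nat n + 1))%Z).

Definition corr (b : Z -> R -> R) (x : R) : R :=
  sum_Z (fun k => Derive (b k) x * b k x).

Definition in_H (h : R -> R * R) : Prop :=
  exists (n : nat) (t : nat -> R) (v : nat -> R * R),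
    t 0%nat = 0 /\
    (forall i : nat, (i < n)%nat -> t i < t (S i)) /\
    (forall s : R, 0 <= s ->
       (forall i : nat, (i < n)%nat -> t i <= s < t (S i) -> h s = v i) /\
       (t n <= s -> h s = (0, 0))).

Definition drift (c sigma : R) (a : R -> R) (b : Z -> R -> R) (h : R -> R * R)
  (s y : R) : R :=
  c + sigma ^ 2 * (a y - / 2 * corr b y)
    + sigma * (b 1%Z y * fst (h s) + b (-1)%Z y * snd (h s)).

(* gamma solves d gamma/dt = drift(t, gamma), gamma(0) = x, for t >= 0
   (Caratheodory / integral form, as h is only piecewise constant). *)
Definition is_sol (c sigma : R) (a : R -> R) (b : Z -> R -> R) (h : R -> R * R)
  (x : R) (gamma : R -> R) : Prop :=
  gamma 0 = x /\
  forall t : R, 0 <= t ->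
    is_RInt (fun s => drift c sigma a b h s (gamma s)) 0 t (gamma t - x).

(* Main.v *)
Require Import Defs.
From Stdlib Require Import Reals ZArith.
From Coquelicot Require Import Coquelicot.
Open Scope R_scope.
From Stdlib Require Import Lra Lia Classical.
Open Scope list_scope.
Open Scope R_scope.


Lemma RI_abs_le f a b I M : a <= b -> is_RInt f a b I ->
  (forall x, a <= x <= b -> Rabs (f x) <= M) -> Rabs I <= (b - a) * M.
Proof. intros Hab HI Hf. apply (norm_RInt_le_const f a b I M Hab); auto. Qed.

Lemma RI_ge_const f a b I c : a <= b -> is_RInt f a b I ->
  (forall x, a <= x <= b -> c <= f x) -> c * (b - a) <= I.
Proof. intros Hab HI Hf.
  assert (H : is_RInt (fun _ => c) a b (c * (b - a))).
  { replace (c * (b - a)) with (scal (b - a) c). exact (@is_RInt_const R_NormedModule a b c).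
    unfold scal; simpl; unfold mult; simpl; ring. } apply (is_RInt_le _ _ a b _ _ Hab H HI). intros; apply Hf; lra. Qed.

Lemma RI_le_const f a b I c : a <= b -> is_RInt f a b I ->
  (forall x, a <= x <= b -> f x <= c) -> I <= c * (b - a).
Proof. intros Hab HI Hf.
  assert (H : is_RInt (fun _ => c) a b (c * (b - a))).
  { replace (c * (b - a)) with (scal (b - a) c). exact (@is_RInt_const R_NormedModule a b c).
    unfold scal; simpl; unfold mult; simpl; ring. } apply (is_RInt_le _ _ a b _ _ Hab HI H). intros; apply Hf; lra. Qed.

Lemma RI_sub f t1 t2 I1 I2 : is_RInt f 0 t1 I1 -> is_RInt f 0 t2 I2 -> is_RInt f t1 t2 (I2 - I1).
Proof. intros H1 H2. apply is_RInt_swap in H1.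
  assert (H := is_RInt_Chasles _ _ _ _ _ _ H1 H2).
  replace (I2 - I1) with (plus (opp I1) I2) by (unfold plus, opp; simpl; ring). exact H. Qed.

Lemma RI_sub' f t0 t1 t2 I1 I2 : is_RInt f t0 t1 I1 -> is_RInt f t0 t2 I2 -> is_RInt f t1 t2 (I2 - I1).
Proof. intros H1 H2. apply is_RInt_swap in H1.
  assert (H := is_RInt_Chasles _ _ _ _ _ _ H1 H2).
  replace (I2 - I1) with (plus (opp I1) I2) by (unfold plus, opp; simpl; ring). exact H. Qed.

Lemma RI_minus f g a b I J : is_RInt f a b I -> is_RInt g a b J ->
  is_RInt (fun s => f s - g s) a b (I - J).
Proof. intros H1 H2. exact (is_RInt_minus _ _ _ _ _ _ H1 H2). Qed.

Lemma RI_abs_cmp w f a b I J : a <= b -> is_RInt w a b I -> is_RInt f a b J ->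
  (forall x, a <= x <= b -> Rabs (w x) <= f x) -> Rabs I <= J.
Proof. intros Hab Hw Hf H.
  apply Rabs_le; split.
  - assert (Ho := is_RInt_opp _ _ _ _ Hf).
    assert (-J <= I); [|lra].
    apply (is_RInt_le _ _ a b _ _ Hab Ho Hw). intros x Hx. unfold opp; simpl.
    specialize (H x ltac:(lra)). apply Rabs_le_between in H. lra.
  - apply (is_RInt_le _ _ a b _ _ Hab Hw Hf). intros x Hx.
    specialize (H x ltac:(lra)). apply Rabs_le_between in H. lra.
Qed.

Lemma RI_expw_fwd K d a t : 0 < K -> is_RInt (fun s => K * d * exp (2 * K * (s - a))) a t
   (d / 2 * exp (2 * K * (t - a)) - d / 2 * exp (2 * K * (a - a))).
Proof. intros HK.
  apply (is_RInt_derive (fun s => d / 2 * exp (2 * K * (s - a)))).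
  - intros x _. auto_derive; auto. unfold Rminus; field.
  - intros x _. apply (@ex_derive_continuous R_AbsRing R_NormedModule). auto_derive; auto.
Qed.

Lemma RI_expw_bwd K d a t : 0 < K -> is_RInt (fun s => K * d * exp (2 * K * (t - s))) a t
   (- d / 2 * exp (2 * K * (t - t)) - (- d / 2 * exp (2 * K * (t - a)))).
Proof. intros HK.
  apply (is_RInt_derive (fun s => - d / 2 * exp (2 * K * (t - s)))).
  - intros x _. auto_derive; auto. unfold Rminus; field.
  - intros x _. apply (@ex_derive_continuous R_AbsRing R_NormedModule). auto_derive; auto.
Qed.

Lemma weight_fwd w a t I K d : 0 < K -> 0 <= d -> a <= t -> is_RInt w a t I ->
  (forall s, a <= s <= t -> Rabs (w s) <= K * d * exp (2 * K * (s - a))) ->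
  Rabs I <= d / 2 * exp (2 * K * (t - a)).
Proof. intros HK Hd Hat HI Hw.
  assert (H := RI_abs_cmp _ _ _ _ _ _ Hat HI (RI_expw_fwd K d a t HK) Hw).
  replace (a - a) with 0 in H by ring. rewrite Rmult_0_r, exp_0 in H. lra. Qed.

Lemma weight_bwd w a t I K d : 0 < K -> 0 <= d -> a <= t -> is_RInt w a t I ->
  (forall s, a <= s <= t -> Rabs (w s) <= K * d * exp (2 * K * (t - s))) ->
  Rabs I <= d / 2 * exp (2 * K * (t - a)).
Proof. intros HK Hd Hat HI Hw.
  assert (H := RI_abs_cmp _ _ _ _ _ _ Hat HI (RI_expw_bwd K d a t HK) Hw).
  replace (t - t) with 0 in H by ring. rewrite Rmult_0_r, exp_0 in H. lra. Qed.

Lemma pow2_small x C : 0 <= C -> (forall n, x <= C / 2 ^ n) -> x <= 0.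
Proof. intros HC H. destruct (Rle_dec x 0) as [|Hx]; auto. exfalso.
  assert (Hx' : 0 < x) by lra.
  destruct (archimed (C / x)) as [Hu _].
  set (n := Z.to_nat (up (C / x))).
  assert (Hn : C / x < INR n).
  { unfold n. rewrite INR_IZR_INZ. rewrite Z2Nat.id. lra.
    apply le_IZR. assert (0 <= C / x) by (apply Rmult_le_pos; auto; left; apply Rinv_0_lt_compat; lra). lra. }
  assert (Hp : INR n <= 2 ^ n).
  { clear. induction n. simpl; lra. rewrite S_INR. simpl.
    assert (1 <= 2 ^ n) by (apply pow_R1_Rle; lra). lra. }
  specialize (H n). assert (H2 : 0 < 2 ^ n) by (apply pow_lt; lra).
  apply (Rmult_le_compat_r (2 ^ n)) in H; [|lra].
  unfold Rdiv in H. rewrite Rmult_assoc, Rinv_l in H by lra.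
  apply (Rmult_lt_compat_r x) in Hn; auto. unfold Rdiv in Hn. rewrite Rmult_assoc, Rinv_l in Hn by lra.
  nra.
Qed.


Lemma exp_mono x y : x <= y -> exp x <= exp y.
Proof. intros [H|H]. left; apply exp_increasing; auto. subst; lra. Qed.

Lemma lip_cont f L : 0 <= L -> (forall x y, Rabs (f x - f y) <= L * Rabs (x - y)) -> continuity f.
Proof. intros HL H x. unfold continuity_pt, continue_in, limit1_in, limit_in. intros e He.
  exists (e / (L + 1)). split. apply Rdiv_lt_0_compat; lra.
  intros y [_ Hy]. simpl in *. unfold R_dist in *.
  eapply Rle_lt_trans. apply H.
  apply Rle_lt_trans with ((L + 1) * Rabs (y - x)). apply Rmult_le_compat_r. apply Rabs_pos. lra.
  apply Rmult_lt_compat_l with (r := L + 1) in Hy; [|lra].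
  replace ((L + 1) * (e / (L + 1))) with e in Hy by (field; lra). lra.
Qed.

Lemma is_RInt_00 (f : R -> R) l : is_RInt f 0 0 l -> l = 0.
Proof. intros H. apply (is_RInt_unique (V:=R_CompleteNormedModule)) in H. rewrite RInt_point in H. rewrite <- H. reflexivity. Qed.

Lemma cont_conv f x : continuity_pt f x -> continuous f x.
Proof. intros H. apply continuity_pt_filterlim. exact H. Qed.

Lemma pow2_lt C e : 0 < e -> exists N, forall n, (N <= n)%nat -> C / 2 ^ n < e.
Proof. intros He.
  destruct (archimed (Rabs C / e)) as [Hu _].
  exists (Z.to_nat (up (Rabs C / e))). intros n Hn.
  assert (Hn' : Rabs C / e < INR n).
  { apply Rlt_le_trans with (INR (Z.to_nat (up (Rabs C / e)))).
    rewrite INR_IZR_INZ. rewrite Z2Nat.id. lra.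
    apply le_IZR. assert (0 <= Rabs C / e) by (apply Rmult_le_pos; [apply Rabs_pos|left; apply Rinv_0_lt_compat; lra]). lra.
    apply le_INR; auto. }
  assert (Hp : INR n <= 2 ^ n).
  { clear. induction n. simpl; lra. rewrite S_INR. simpl.
    assert (1 <= 2 ^ n) by (apply pow_R1_Rle; lra). lra. }
  assert (H2 : 0 < 2 ^ n) by (apply pow_lt; lra).
  apply Rle_lt_trans with (Rabs C / 2 ^ n).
  apply Rmult_le_compat_r. left; apply Rinv_0_lt_compat; lra. apply Rle_abs.
  apply (Rmult_lt_reg_r (2 ^ n)); auto. unfold Rdiv. rewrite Rmult_assoc, Rinv_l by lra.
  apply (Rmult_lt_compat_r e) in Hn'; auto. unfold Rdiv in Hn'. rewrite Rmult_assoc, Rinv_l in Hn' by lra.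
  nra.
Qed.

Section ODE.
Variable D : R -> R -> R.
Variables K M : R.
Hypothesis HK : 1 <= K.
Hypothesis HM : 0 <= M.
Hypothesis HL : forall s y z, Rabs (D s y - D s z) <= K * Rabs (y - z).
Hypothesis HB : forall s y, Rabs (D s y) <= M.

Definition solF x (g : R -> R) := forall t, 0 <= t -> is_RInt (fun s => D s (g s)) 0 t (g t - x).

Lemma sol_lip x g : solF x g -> forall t t', 0 <= t -> 0 <= t' -> Rabs (g t - g t') <= M * Rabs (t - t').
Proof. intros Hg.
  assert (W : forall t t', 0 <= t' <= t -> Rabs (g t - g t') <= M * Rabs (t - t')).
  { intros t t' Ht. assert (H := RI_sub _ _ _ _ _ (Hg t' ltac:(lra)) (Hg t ltac:(lra))).
    assert (H2 := RI_abs_le _ t' t _ M ltac:(lra) H (fun s _ => HB s (g s))).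
    replace (g t - x - (g t' - x)) with (g t - g t') in H2 by ring.
    rewrite (Rabs_pos_eq (t - t')) by lra. lra. }
  intros t t' Ht Ht'. destruct (Rle_dec t' t). apply W; lra.
  rewrite Rabs_minus_sym, (Rabs_minus_sym t). apply W; lra.
Qed.

Lemma sol_0 x g : solF x g -> g 0 = x.
Proof. intros H. specialize (H 0 (Rle_refl 0)). apply is_RInt_00 in H. lra. Qed.

Lemma uniq_fwd tau x u v :
  (forall t, 0 <= t <= tau -> is_RInt (fun s => D s (u s)) 0 t (u t - x)) ->
  (forall t, 0 <= t <= tau -> is_RInt (fun s => D s (v s)) 0 t (v t - x)) ->
  forall t, 0 <= t <= tau -> u t = v t.
Proof. intros Hu Hv.
  set (w := fun s => D s (u s) - D s (v s)).
  assert (Hw : forall t, 0 <= t <= tau -> is_RInt w 0 t (u t - v t)).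
  { intros t Ht. replace (u t - v t) with ((u t - x) - (v t - x)) by ring.
    apply RI_minus; auto. }
  assert (Hb : forall t, 0 <= t <= tau -> Rabs (u t - v t) <= 2 * M * tau).
  { intros t Ht. assert (H := RI_abs_le _ 0 t _ (2 * M) ltac:(lra) (Hw t Ht)).
    assert (2 * M * t <= 2 * M * tau) by nra.
    enough (Rabs (u t - v t) <= (t - 0) * (2 * M)) by lra. apply H.
    intros s Hs. unfold w.
    unfold Rminus. eapply Rle_trans. apply Rabs_triang. rewrite Rabs_Ropp.
    assert (H1 := HB s (u s)). assert (H2 := HB s (v s)). lra. }
  assert (Hn : forall n, forall t, 0 <= t <= tau -> Rabs (u t - v t) <= 2 * M * tau / 2 ^ n * exp (2 * K * (t - 0))).
  { induction n.
    - intros t Ht. simpl. replace (2 * M * tau / 1) with (2 * M * tau) by field.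
      assert (1 <= exp (2 * K * (t - 0))) by (rewrite <- exp_0; apply exp_mono; nra).
      assert (0 <= 2 * M * tau) by nra. specialize (Hb t Ht). nra.
    - intros t Ht.
      replace (2 * M * tau / 2 ^ S n) with ((2 * M * tau / 2 ^ n) / 2) by (simpl; field; apply pow_nonzero; lra).
      apply (weight_fwd w 0 t _ K). lra.
      apply Rmult_le_pos. nra. left; apply Rinv_0_lt_compat, pow_lt; lra. lra. apply Hw; auto.
      intros s Hs. unfold w. eapply Rle_trans. apply HL. rewrite Rmult_assoc. apply Rmult_le_compat_l. lra.
      apply IHn. lra. }
  intros t Ht. assert (Rabs (u t - v t) <= 0).
  { apply (pow2_small _ (2 * M * tau * exp (2 * K * (t - 0)))).
    apply Rmult_le_pos. nra. left; apply exp_pos.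
    intros n. specialize (Hn n t Ht). unfold Rdiv in *. lra. }
  assert (H0 := Rabs_pos (u t - v t)). apply Rminus_diag_uniq. apply Rabs_eq_0. lra.
Qed.

Lemma uniq_bwd tau xu xv u v : 0 <= tau ->
  (forall t, 0 <= t <= tau -> is_RInt (fun s => D s (u s)) 0 t (u t - xu)) ->
  (forall t, 0 <= t <= tau -> is_RInt (fun s => D s (v s)) 0 t (v t - xv)) ->
  u tau = v tau -> xu = xv.
Proof. intros Htau Hu Hv Heq.
  set (w := fun s => D s (u s) - D s (v s)).
  assert (Hw : forall t, 0 <= t <= tau -> is_RInt w 0 t ((u t - v t) - (xu - xv))).
  { intros t Ht. replace ((u t - v t) - (xu - xv)) with ((u t - xu) - (v t - xv)) by ring.
    apply RI_minus; auto. }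
  assert (Hwb : forall s, Rabs (w s) <= 2 * M).
  { intros s. unfold w. unfold Rminus. eapply Rle_trans. apply Rabs_triang. rewrite Rabs_Ropp.
    assert (H1 := HB s (u s)). assert (H2 := HB s (v s)). lra. }
  set (C := Rabs (xu - xv) + 2 * M * tau).
  assert (Hb : forall t, 0 <= t <= tau -> Rabs (u t - v t) <= C).
  { intros t Ht. assert (H := RI_abs_le _ 0 t _ (2 * M) ltac:(lra) (Hw t Ht) (fun s _ => Hwb s)).
    assert (2 * M * t <= 2 * M * tau) by nra. unfold C.
    replace (u t - v t) with ((u t - v t - (xu - xv)) + (xu - xv)) by ring.
    eapply Rle_trans. apply Rabs_triang. lra. }
  assert (Hw2 : forall t, 0 <= t <= tau -> is_RInt w t tau (- (u t - v t))).
  { intros t Ht. assert (H := RI_sub _ _ _ _ _ (Hw t Ht) (Hw tau ltac:(lra))).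
    replace (- (u t - v t)) with (u tau - v tau - (xu - xv) - (u t - v t - (xu - xv))) by (rewrite Heq; ring).
    exact H. }
  assert (Hn : forall n, forall t, 0 <= t <= tau -> Rabs (u t - v t) <= C / 2 ^ n * exp (2 * K * (tau - t))).
  { induction n.
    - intros t Ht. simpl. replace (C / 1) with C by field.
      assert (1 <= exp (2 * K * (tau - t))) by (rewrite <- exp_0; apply exp_mono; nra).
      assert (0 <= C) by (unfold C; assert (0 <= Rabs (xu - xv)) by apply Rabs_pos; nra). specialize (Hb t Ht). nra.
    - intros t Ht.
      replace (C / 2 ^ S n) with ((C / 2 ^ n) / 2) by (simpl; field; apply pow_nonzero; lra).
      rewrite <- Rabs_Ropp.
      apply (weight_bwd w t tau _ K). lra.
      apply Rmult_le_pos. unfold C; assert (0 <= Rabs (xu - xv)) by apply Rabs_pos; nra.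
      left; apply Rinv_0_lt_compat, pow_lt; lra. lra. apply Hw2; auto.
      intros s Hs. unfold w. eapply Rle_trans. apply HL. rewrite Rmult_assoc. apply Rmult_le_compat_l. lra.
      apply IHn. lra. }
  assert (E0 : u 0 - v 0 = xu - xv).
  { specialize (Hw 0 ltac:(lra)). apply is_RInt_00 in Hw. lra. }
  assert (Rabs (u 0 - v 0) <= 0).
  { apply (pow2_small _ (C * exp (2 * K * (tau - 0)))).
    apply Rmult_le_pos. unfold C; assert (0 <= Rabs (xu - xv)) by apply Rabs_pos; nra. left; apply exp_pos.
    intros n. specialize (Hn n 0 ltac:(lra)). unfold Rdiv in *. lra. }
  assert (H0 := Rabs_pos (u 0 - v 0)). assert (u 0 - v 0 = 0) by (apply Rabs_eq_0; lra). lra.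
Qed.

Lemma order_sol xu xv u v : solF xu u -> solF xv v -> xu < xv -> forall t, 0 <= t -> u t < v t.
Proof. intros Hu Hv Hlt t1 Ht1. destruct (Rlt_dec (u t1) (v t1)) as [|Hn]; auto. exfalso.
  set (cl := fun s => Rmax 0 (Rmin s t1)).
  set (e := fun s => u (cl s) - v (cl s)).
  assert (Hcl : forall s, 0 <= cl s <= t1) by (intros; unfold cl, Rmax, Rmin; repeat destruct Rle_dec; lra).
  assert (Hcl2 : forall s s', Rabs (cl s - cl s') <= Rabs (s - s')) by
    (intros; unfold cl, Rmax, Rmin; repeat destruct Rle_dec; split_Rabs; lra).
  assert (Hec : continuity e).
  { apply (lip_cont _ (2 * M)). lra. intros x y. unfold e.
    assert (H1 := sol_lip _ _ Hu (cl x) (cl y) ltac:(apply Hcl) ltac:(apply Hcl)).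
    assert (H2 := sol_lip _ _ Hv (cl x) (cl y) ltac:(apply Hcl) ltac:(apply Hcl)).
    replace (u (cl x) - v (cl x) - (u (cl y) - v (cl y))) with ((u (cl x) - u (cl y)) - (v (cl x) - v (cl y))) by ring.
    unfold Rminus at 1. eapply Rle_trans. apply Rabs_triang. rewrite Rabs_Ropp.
    specialize (Hcl2 x y). nra. }
  assert (Hu0 := sol_0 _ _ Hu). assert (Hv0 := sol_0 _ _ Hv).
  assert (Ecl0 : cl 0 = 0) by (unfold cl, Rmax, Rmin; repeat destruct Rle_dec; lra).
  assert (Ecl1 : cl t1 = t1) by (unfold cl, Rmax, Rmin; repeat destruct Rle_dec; lra).
  assert (He0 : e 0 < 0) by (unfold e; rewrite Ecl0; lra).
  assert (Hex : exists tau, 0 <= tau <= t1 /\ u tau = v tau).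
  { destruct (Rlt_dec 0 (e t1)) as [Hp|Hp].
    - assert (Ht : 0 < t1). { destruct Ht1; auto. subst. lra. }
      destruct (IVT e 0 t1 Hec Ht He0 Hp) as [z [Hz Hz2]]. exists (cl z).
      split. apply Hcl. unfold e in Hz2. lra.
    - exists t1. split. lra. unfold e in Hp. rewrite Ecl1 in Hp. lra. }
  destruct Hex as [tau [Htau Heq]].
  assert (xu = xv).
  { apply (uniq_bwd tau xu xv u v). lra. intros; apply Hu; lra. intros; apply Hv; lra. auto. }
  lra.
Qed.

Hypothesis Hint : forall y, continuity y -> forall t, 0 <= t -> ex_RInt (fun s => D s (y s)) 0 t.

Fixpoint pic (x : R) (n : nat) : R -> R :=
  match n with O => fun _ => x | S k => fun t => x + RInt (fun s => D s (pic x k s)) 0 (Rmax 0 t) end.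

Lemma Rmax_lip t t' : Rabs (Rmax 0 t - Rmax 0 t') <= Rabs (t - t').
Proof. unfold Rmax; repeat destruct Rle_dec; split_Rabs; lra. Qed.

Lemma pic_lip x n : forall t t', Rabs (pic x n t - pic x n t') <= M * Rabs (t - t').
Proof. induction n.
  - intros; simpl. replace (x - x) with 0 by ring. rewrite Rabs_R0. apply Rmult_le_pos; auto; apply Rabs_pos.
  - assert (Hc : continuity (pic x n)) by (apply (lip_cont _ M); auto).
    set (f := fun s => D s (pic x n s)).
    assert (W : forall r r', 0 <= r' <= r -> Rabs (RInt f 0 r - RInt f 0 r') <= M * (r - r')).
    { intros r r' Hr. assert (H1 := RInt_correct _ _ _ (Hint _ Hc r ltac:(lra))).
      assert (H2 := RInt_correct _ _ _ (Hint _ Hc r' ltac:(lra))).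
      assert (H := RI_sub _ _ _ _ _ H2 H1).
      assert (H3 := RI_abs_le _ r' r _ M ltac:(lra) H (fun s _ => HB s _)). unfold f. nra. }
    intros t t'. simpl. fold f.
    replace (x + RInt f 0 (Rmax 0 t) - (x + RInt f 0 (Rmax 0 t'))) with (RInt f 0 (Rmax 0 t) - RInt f 0 (Rmax 0 t')) by ring.
    assert (Hm := Rmax_lip t t').
    assert (0 <= Rmax 0 t) by apply Rmax_l. assert (0 <= Rmax 0 t') by apply Rmax_l.
    destruct (Rle_dec (Rmax 0 t') (Rmax 0 t)).
    + eapply Rle_trans. apply W; lra. rewrite (Rabs_pos_eq (Rmax 0 t - Rmax 0 t')) in Hm by lra. nra.
    + rewrite Rabs_minus_sym. eapply Rle_trans. apply W; lra.
      rewrite (Rabs_left1 (Rmax 0 t - Rmax 0 t')) in Hm by lra. nra.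
Qed.

Lemma pic_cont x n : continuity (pic x n).
Proof. apply (lip_cont _ M); auto. apply pic_lip. Qed.

Lemma pic_step x n t : 0 <= t -> is_RInt (fun s => D s (pic x n s)) 0 t (pic x (S n) t - x).
Proof. intros Ht. simpl. rewrite Rmax_right by lra. assert (E : forall a b : R, a + b - a = b) by (intros; ring). rewrite E.
  apply (RInt_correct (V:=R_CompleteNormedModule)). apply Hint; auto. apply pic_cont. Qed.

Lemma pic_diff x n t : 0 <= t -> Rabs (pic x (S n) t - pic x n t) <= M / 2 ^ n * exp (2 * K * (t - 0)).
Proof. revert t. induction n.
  - intros t Ht. assert (H := RI_abs_le _ 0 t _ M ltac:(lra) (pic_step x 0 t Ht) (fun s _ => HB s _)).
    simpl pic at 2. replace (M / 2 ^ 0) with M by (simpl; field).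
    assert (t <= exp (2 * K * (t - 0))) by (assert (H2 := exp_ineq1_le (2 * K * (t - 0))); nra). nra.
  - intros t Ht.
    assert (H := RI_minus _ _ _ _ _ _ (pic_step x (S n) t Ht) (pic_step x n t Ht)).
    replace (pic x (S (S n)) t - x - (pic x (S n) t - x)) with (pic x (S (S n)) t - pic x (S n) t) in H by ring.
    replace (M / 2 ^ S n) with ((M / 2 ^ n) / 2) by (simpl; field; apply pow_nonzero; lra).
    apply (weight_fwd (fun s => D s (pic x (S n) s) - D s (pic x n s)) 0 t _ K). lra. apply Rmult_le_pos; auto. left; apply Rinv_0_lt_compat, pow_lt; lra.
    lra. exact H.
    intros s Hs. eapply Rle_trans. apply HL. rewrite Rmult_assoc. apply Rmult_le_compat_l. lra. apply IHn. lra.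
Qed.

Lemma pic_cauchy x n k t : 0 <= t -> Rabs (pic x (k + n) t - pic x n t) <= (2 * M / 2 ^ n - 2 * M / 2 ^ (k + n)) * exp (2 * K * (t - 0)).
Proof. intros Ht. induction k.
  - simpl. replace (pic x n t - pic x n t) with 0 by ring. rewrite Rabs_R0. lra.
  - replace (pic x (S k + n) t - pic x n t) with ((pic x (S (k + n)) t - pic x (k + n) t) + (pic x (k + n) t - pic x n t)) by (simpl; ring).
    eapply Rle_trans. apply Rabs_triang. assert (H := pic_diff x (k + n) t Ht).
    replace (2 ^ (S k + n)) with (2 * 2 ^ (k + n)) by (simpl; ring).
    assert (0 < 2 ^ (k + n)) by (apply pow_lt; lra).
    replace ((2 * M / 2 ^ n - 2 * M / (2 * 2 ^ (k + n))) * exp (2 * K * (t - 0))) with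
      (M / 2 ^ (k + n) * exp (2 * K * (t - 0)) + (2 * M / 2 ^ n - 2 * M / 2 ^ (k + n)) * exp (2 * K * (t - 0))) by (field; split; apply pow_nonzero; lra).
    lra.
Qed.

Lemma pic_cauchy2 x n k t : 0 <= t -> Rabs (pic x (k + n) t - pic x n t) <= 2 * M / 2 ^ n * exp (2 * K * (t - 0)).
Proof. intros Ht. eapply Rle_trans. apply pic_cauchy; auto.
  apply Rmult_le_compat_r. left; apply exp_pos.
  assert (0 <= 2 * M / 2 ^ (k + n)) by (apply Rmult_le_pos; [lra|left; apply Rinv_0_lt_compat, pow_lt; lra]). lra.
Qed.

Definition Ysol x t : R := real (Lim_seq (fun n => pic x n t)).

Lemma Ysol_lim x t : 0 <= t -> is_lim_seq (fun n => pic x n t) (Ysol x t).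
Proof. intros Ht. apply Lim_seq_correct'. apply ex_lim_seq_cauchy_corr.
  intros eps. destruct (pow2_lt (2 * (2 * M * exp (2 * K * (t - 0)))) eps (cond_pos eps)) as [N HN].
  exists N. intros n m Hn Hm.
  assert (H1 := pic_cauchy2 x N (n - N) t Ht). assert (H2 := pic_cauchy2 x N (m - N) t Ht).
  replace (n - N + N)%nat with n in H1 by lia. replace (m - N + N)%nat with m in H2 by lia.
  specialize (HN N (le_n N)).
  replace (pic x n t - pic x m t) with ((pic x n t - pic x N t) - (pic x m t - pic x N t)) by ring.
  unfold Rminus at 1. eapply Rle_lt_trans. apply Rabs_triang. rewrite Rabs_Ropp.
  eapply Rle_lt_trans. apply Rplus_le_compat; [exact H1|exact H2].
  replace (2 * M / 2 ^ N * exp (2 * K * (t - 0)) + 2 * M / 2 ^ N * exp (2 * K * (t - 0))) with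
   (2 * (2 * M * exp (2 * K * (t - 0))) / 2 ^ N) by (field; apply pow_nonzero; lra). exact HN.
Qed.

Lemma Ysol_bound x n t : 0 <= t -> Rabs (Ysol x t - pic x n t) <= 2 * M / 2 ^ n * exp (2 * K * (t - 0)).
Proof. intros Ht. assert (H := Ysol_lim x t Ht).
  apply (is_lim_seq_incr_n _ n) in H.
  assert (H2 := is_lim_seq_minus' _ _ _ _ H (is_lim_seq_const (pic x n t))).
  apply is_lim_seq_abs in H2.
  assert (H3 := is_lim_seq_le _ _ _ _ (fun k => pic_cauchy2 x n k t Ht) H2 (is_lim_seq_const _)).
  simpl in H3. exact H3.
Qed.

Lemma pic_max x n t : pic x n t = pic x n (Rmax 0 t).
Proof. destruct n; simpl; auto. rewrite (Rmax_right 0 (Rmax 0 t)); auto. apply Rmax_l. Qed.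

Lemma Ysol_lip x t t' : Rabs (Ysol x t - Ysol x t') <= M * Rabs (t - t').
Proof.
  assert (W : forall t t', 0 <= t -> 0 <= t' -> Rabs (Ysol x t - Ysol x t') <= M * Rabs (t - t')).
  { clear t t'. intros t t' Ht Ht'.
    assert (Hle : Rabs (Ysol x t - Ysol x t') - M * Rabs (t - t') <= 0).
    { apply (pow2_small _ (2 * M * exp (2 * K * (t - 0)) + 2 * M * exp (2 * K * (t' - 0)))).
      assert (0 < exp (2 * K * (t - 0))) by apply exp_pos. assert (0 < exp (2 * K * (t' - 0))) by apply exp_pos. nra.
      intros n. assert (H1 := Ysol_bound x n t Ht). assert (H2 := Ysol_bound x n t' Ht').
      assert (H3 := pic_lip x n t t').
      replace (Ysol x t - Ysol x t') with ((Ysol x t - pic x n t) + (pic x n t - pic x n t') - (Ysol x t' - pic x n t')) by ring.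
      assert (H4 : Rabs ((Ysol x t - pic x n t) + (pic x n t - pic x n t') - (Ysol x t' - pic x n t')) <= Rabs ((Ysol x t - pic x n t) + (pic x n t - pic x n t')) + Rabs (Ysol x t' - pic x n t')).
      { unfold Rminus at 1. eapply Rle_trans. apply Rabs_triang. rewrite Rabs_Ropp. lra. }
      assert (H5 := Rabs_triang (Ysol x t - pic x n t) (pic x n t - pic x n t')).
      replace ((2 * M * exp (2 * K * (t - 0)) + 2 * M * exp (2 * K * (t' - 0))) / 2 ^ n) with
        (2 * M / 2 ^ n * exp (2 * K * (t - 0)) + 2 * M / 2 ^ n * exp (2 * K * (t' - 0))) by (field; apply pow_nonzero; lra).
      lra. }
    lra. }
  assert (E : forall t, Ysol x t = Ysol x (Rmax 0 t)).
  { intros. unfold Ysol. f_equal. apply Lim_seq_ext. intros; apply pic_max. }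
  rewrite (E t), (E t'). eapply Rle_trans. apply W; apply Rmax_l.
  apply Rmult_le_compat_l; auto. apply Rmax_lip.
Qed.

Lemma Ysol_sol x : solF x (Ysol x).
Proof. intros t Ht.
  assert (Hc : continuity (Ysol x)) by (apply (lip_cont _ M); auto; apply Ysol_lip).
  assert (HI := RInt_correct _ _ _ (Hint _ Hc t Ht)).
  replace (Ysol x t - x) with (RInt (fun s => D s (Ysol x s)) 0 t); auto.
  set (I := RInt (fun s => D s (Ysol x s)) 0 t) in *.
  assert (Hle : Rabs (I - (Ysol x t - x)) <= 0).
  { apply (pow2_small _ (t * (K * (2 * M * exp (2 * K * (t - 0)))) + 2 * M * exp (2 * K * (t - 0)))).
    assert (0 < exp (2 * K * (t - 0))) by apply exp_pos. assert (0 <= K * (2 * M * exp (2 * K * (t - 0)))) by (apply Rmult_le_pos; nra).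
    nra.
    intros n. assert (H := RI_minus _ _ _ _ _ _ HI (pic_step x n t Ht)).
    assert (Hb := RI_abs_le _ 0 t _ (K * (2 * M / 2 ^ n * exp (2 * K * (t - 0)))) ltac:(lra) H).
    assert (Hb2 : Rabs (I - (pic x (S n) t - x)) <= (t - 0) * (K * (2 * M / 2 ^ n * exp (2 * K * (t - 0))))).
    { apply Hb. intros s Hs. eapply Rle_trans. apply HL. apply Rmult_le_compat_l. lra.
      eapply Rle_trans. apply Ysol_bound. lra. apply Rmult_le_compat_l.
      apply Rmult_le_pos; [lra|left; apply Rinv_0_lt_compat, pow_lt; lra]. apply exp_mono. nra. }
    assert (H3 := Ysol_bound x (S n) t Ht).
    assert (H4 : 2 * M / 2 ^ S n <= 2 * M / 2 ^ n).
    { simpl. assert (0 < 2 ^ n) by (apply pow_lt; lra). unfold Rdiv. apply Rmult_le_compat_l. lra.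
      apply Rinv_le_contravar; lra. }
    assert (H5 : Rabs (I - (Ysol x t - x)) <= Rabs (I - (pic x (S n) t - x)) + Rabs (Ysol x t - pic x (S n) t)).
    { replace (I - (Ysol x t - x)) with ((I - (pic x (S n) t - x)) - (Ysol x t - pic x (S n) t)) by ring.
      unfold Rminus at 1. eapply Rle_trans. apply Rabs_triang. rewrite Rabs_Ropp. lra. }
    assert (0 < exp (2 * K * (t - 0))) by apply exp_pos.
    replace ((t * (K * (2 * M * exp (2 * K * (t - 0)))) + 2 * M * exp (2 * K * (t - 0))) / 2 ^ n) with
      ((t - 0) * (K * (2 * M / 2 ^ n * exp (2 * K * (t - 0)))) + 2 * M / 2 ^ n * exp (2 * K * (t - 0))) by (field; apply pow_nonzero; lra).
    nra. }
  assert (H0 := Rabs_pos (I - (Ysol x t - x))). assert (I - (Ysol x t - x) = 0) by (apply Rabs_eq_0; lra). lra.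
Qed.

Lemma exists_sol x : exists g, g 0 = x /\ solF x g.
Proof. exists (Ysol x). split. apply (sol_0 _ _ (Ysol_sol x)). apply Ysol_sol. Qed.

End ODE.


Definition phase_ok (G : R -> R) KG (g : R -> R) Mg t0 t1 :=
  0 < KG /\ 0 < Mg /\ t0 <= t1 /\
  (forall y z, Rabs (G y - G z) <= KG * Rabs (y - z)) /\
  (forall s s', t0 <= s <= t1 -> t0 <= s' <= t1 -> Rabs (g s - g s') <= Mg * Rabs (s - s')) /\
  (forall a b, t0 <= a <= b -> b <= t1 -> is_RInt (fun s => G (g s)) a b (g b - g a)).

Lemma barrier_low G KG g Mg t0 t1 p a : phase_ok G KG g Mg t0 t1 -> 0 < G p ->
  t0 <= a <= t1 -> p <= g a -> forall t, a <= t <= t1 -> p <= g t.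
Proof. intros [HKG [HMg [Ht01 [HGL [Hgl HI]]]]] HGp Ha Hga t Ht.
  destruct (Rle_dec p (g t)) as [|Hgt]; auto. exfalso. apply Rnot_le_lt in Hgt.
  set (E := fun s => a <= s <= t /\ p <= g s).
  assert (Hb : bound E) by (exists t; intros s [Hs _]; lra).
  assert (He : exists s, E s) by (exists a; split; auto; lra).
  destruct (completeness E Hb He) as [ss [Hub Hlub]].
  assert (Hss1 : a <= ss) by (apply Hub; split; auto; lra).
  assert (Hss2 : ss <= t) by (apply Hlub; intros s [Hs _]; lra).
  assert (Hg1 : p <= g ss).
  { destruct (Rle_dec p (g ss)) as [|Hn]; auto. exfalso. apply Rnot_le_lt in Hn.
    set (eta := (p - g ss) / Mg).
    assert (Heta : 0 < eta) by (unfold eta; apply Rdiv_lt_0_compat; lra).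
    assert (Hnub : ~ is_upper_bound E (ss - eta / 2)) by (intros H; specialize (Hlub _ H); lra).
    apply not_all_ex_not in Hnub. destruct Hnub as [s Hs].
    apply imply_to_and in Hs. destruct Hs as [HEs Hs]. apply Rnot_le_lt in Hs.
    assert (s <= ss) by (apply Hub; auto). destruct HEs as [HEs1 HEs2].
    assert (Hq := Hgl s ss ltac:(lra) ltac:(lra)). rewrite (Rabs_left1 (s - ss)) in Hq by lra.
    assert (Hm : Mg * (- (s - ss)) < Mg * eta) by (apply Rmult_lt_compat_l; lra).
    unfold eta in Hm. replace (Mg * ((p - g ss) / Mg)) with (p - g ss) in Hm by (field; lra).
    apply Rabs_le_between in Hq. lra. }
  assert (Hss3 : ss < t) by (destruct Hss2; auto; subst; lra).
  assert (Hg2 : g ss <= p).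
  { destruct (Rle_dec (g ss) p) as [|Hn]; auto. exfalso. apply Rnot_le_lt in Hn.
    set (eta := Rmin ((g ss - p) / Mg) (t - ss) / 2).
    assert (Heta : 0 < eta) by (unfold eta, Rmin; destruct Rle_dec; [apply Rmult_lt_0_compat; [apply Rdiv_lt_0_compat|]|]; lra).
    assert (Heta2 : eta <= (g ss - p) / Mg / 2) by (unfold eta, Rmin; destruct Rle_dec; lra).
    assert (Heta3 : eta <= (t - ss) / 2) by (unfold eta, Rmin; destruct Rle_dec; lra).
    assert (HE : E (ss + eta)).
    { split. lra. assert (H := Hgl (ss + eta) ss ltac:(lra) ltac:(lra)).
      replace (ss + eta - ss) with eta in H by ring. rewrite (Rabs_pos_eq eta) in H by lra.
      apply Rabs_le_between in H.
      assert (Hm : Mg * eta <= Mg * ((g ss - p) / Mg / 2)) by (apply Rmult_le_compat_l; lra).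
      replace (Mg * ((g ss - p) / Mg / 2)) with ((g ss - p) / 2) in Hm by (field; lra). lra. }
    specialize (Hub _ HE). lra. }
  assert (Hgp : g ss = p) by lra.
  set (eta := Rmin (t - ss) (G p / (2 * KG * Mg))).
  assert (Heta : 0 < eta) by (unfold eta, Rmin; destruct Rle_dec; [lra|apply Rdiv_lt_0_compat; [lra|]; apply Rmult_lt_0_compat; lra]).
  assert (Heta2 : eta <= t - ss) by (unfold eta; apply Rmin_l).
  assert (Heta3 : eta <= G p / (2 * KG * Mg)) by (unfold eta; apply Rmin_r).
  assert (Hint := HI ss (ss + eta) ltac:(lra) ltac:(lra)).
  assert (Hlow : G p / 2 * (ss + eta - ss) <= g (ss + eta) - g ss).
  { apply (RI_ge_const (fun s => G (g s)) ss (ss + eta)). lra. exact Hint. intros s Hs.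
    assert (H1 := HGL (g s) p). assert (H2 := Hgl s ss ltac:(lra) ltac:(lra)).
    rewrite Hgp in H2. rewrite (Rabs_pos_eq (s - ss)) in H2 by lra.
    assert (KG * Rabs (g s - p) <= KG * (Mg * (s - ss))) by (apply Rmult_le_compat_l; lra).
    assert (KG * (Mg * (s - ss)) <= KG * (Mg * eta)) by (apply Rmult_le_compat_l; [lra|]; apply Rmult_le_compat_l; lra).
    assert (KG * (Mg * eta) <= KG * (Mg * (G p / (2 * KG * Mg)))) by (apply Rmult_le_compat_l; [lra|]; apply Rmult_le_compat_l; lra).
    replace (KG * (Mg * (G p / (2 * KG * Mg)))) with (G p / 2) in H3 by (field; lra).
    apply Rabs_le_between in H1. lra. }
  assert (HE : E (ss + eta)).
  { split. lra. assert (0 < G p / 2 * eta) by (apply Rmult_lt_0_compat; lra). 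
    replace (ss + eta - ss) with eta in Hlow by ring. lra. }
  specialize (Hub _ HE). lra.
Qed.

Lemma phase_ok_refl G KG g Mg t0 t1 : phase_ok G KG g Mg t0 t1 ->
  phase_ok (fun y => - G (- y)) KG (fun s => - g s) Mg t0 t1.
Proof. intros [HKG [HMg [Ht01 [HGL [Hgl HI]]]]]. repeat split; auto.
  - intros y z. replace (- G (- y) - - G (- z)) with (- (G (- y) - G (- z))) by ring. rewrite Rabs_Ropp.
    replace (y - z) with (- (- y - - z)) by ring. rewrite (Rabs_Ropp (- y - - z)). apply HGL.
  - intros s s' Hs Hs'. replace (- g s - - g s') with (- (g s - g s')) by ring. rewrite Rabs_Ropp. auto.
  - intros a b Ha Hb. specialize (HI a b Ha Hb). apply is_RInt_opp in HI.
    replace (- g b - - g a) with (opp (g b - g a)) by (unfold opp; simpl; ring).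
    apply (is_RInt_ext (fun y => opp (G (g y)))); [|exact HI].
    intros x _. unfold opp; simpl. rewrite Ropp_involutive. reflexivity.
Qed.

Lemma barrier_up G KG g Mg t0 t1 q a : phase_ok G KG g Mg t0 t1 -> G q < 0 ->
  t0 <= a <= t1 -> g a <= q -> forall t, a <= t <= t1 -> g t <= q.
Proof. intros Hok HG Ha Hga t Ht.
  assert (H := barrier_low _ _ _ _ _ _ (- q) a (phase_ok_refl _ _ _ _ _ _ Hok)).
  simpl in H. rewrite Ropp_involutive in H. assert (- g t >= - q); [|lra].
  apply Rle_ge, H; auto; lra.
Qed.

Lemma capture_up G KG g Mg t0 t1 p q1 q2 : phase_ok G KG g Mg t0 t1 ->
  p <= q1 <= q2 -> (forall y, p <= y <= q1 -> 1 <= G y) -> G q2 < 0 -> q1 - p <= t1 - t0 ->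
  p <= g t0 <= q2 -> q1 <= g t1 /\ g t1 <= q2.
Proof. intros Hok Hpq HG Hq2 Hlen Hg0.
  assert (Hok' := Hok). destruct Hok' as [HKG [HMg [Ht01 [HGL [Hgl HI]]]]].
  assert (Hlo := barrier_low _ _ _ _ _ _ p t0 Hok ltac:(specialize (HG p ltac:(lra)); lra) ltac:(lra) ltac:(lra)).
  assert (Hhi := barrier_up _ _ _ _ _ _ q2 t0 Hok Hq2 ltac:(lra) ltac:(lra)).
  split; [|apply Hhi; lra].
  destruct (Rle_dec q1 (g t1)) as [|Hn]; auto. exfalso. apply Rnot_le_lt in Hn.
  destruct (classic (exists s, t0 <= s <= t1 /\ q1 <= g s)) as [[s [Hs Hgs]]|Hno].
  - assert (H := barrier_low _ _ _ _ _ _ q1 s Hok ltac:(specialize (HG q1 ltac:(lra)); lra) Hs Hgs t1 ltac:(lra)). lra.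
  - assert (Hall : forall s, t0 <= s <= t1 -> g s < q1).
    { intros s Hs. destruct (Rlt_dec (g s) q1); auto. exfalso. apply Hno. exists s; split; auto; lra. }
    assert (H := RI_ge_const (fun s => G (g s)) t0 t1 _ 1 Ht01 (HI t0 t1 ltac:(lra) ltac:(lra))).
    assert (1 * (t1 - t0) <= g t1 - g t0).
    { apply H. intros s Hs. apply HG. split. apply Hlo; lra. left; apply Hall; auto. }
    lra.
Qed.

Lemma capture_down G KG g Mg t0 t1 p q1 q2 : phase_ok G KG g Mg t0 t1 ->
  q2 <= q1 <= p -> (forall y, q1 <= y <= p -> G y <= -1) -> 0 < G q2 -> p - q1 <= t1 - t0 ->
  q2 <= g t0 <= p -> q2 <= g t1 /\ g t1 <= q1.
Proof. intros Hok Hpq HG Hq2 Hlen Hg0.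
  assert (H := capture_up _ _ _ _ _ _ (- p) (- q1) (- q2) (phase_ok_refl _ _ _ _ _ _ Hok)).
  simpl in H. destruct H. lra.
  intros y Hy. specialize (HG (- y) ltac:(lra)). lra.
  rewrite Ropp_involutive. lra. lra. lra. lra.
Qed.

Set Default Proof Using "All".


Lemma per_nat f : periodic1 f -> forall x n, f (x + INR n) = f x.
Proof. intros Hp x n. induction n. simpl. rewrite Rplus_0_r. auto.
  rewrite S_INR. replace (x + (INR n + 1)) with ((x + INR n) + 1) by ring. rewrite Hp. auto. Qed.

Lemma per_Z f : periodic1 f -> forall x n, f (x + IZR n) = f x.
Proof. intros Hp x n. destruct (Z_le_gt_dec 0 n).
  - rewrite <- (Z2Nat.id n) by lia. rewrite <- INR_IZR_INZ. apply per_nat; auto.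
  - replace n with (- Z.of_nat (Z.to_nat (- n)))%Z by lia. rewrite opp_IZR. rewrite <- INR_IZR_INZ.
    rewrite <- (per_nat f Hp (x + - INR (Z.to_nat (- n))) (Z.to_nat (- n))). f_equal. ring.
Qed.

Lemma bounded_per f : (forall x, continuity_pt f x) -> periodic1 f -> exists M, 0 <= M /\ forall x, Rabs (f x) <= M.
Proof. intros Hc Hp.
  destruct (continuity_ab_maj f 0 1 ltac:(lra) (fun c _ => Hc c)) as [x1 [H1 _]].
  destruct (continuity_ab_maj (fun x => - f x) 0 1 ltac:(lra) (fun c _ => continuity_pt_opp _ _ (Hc c))) as [x2 [H2 _]].
  exists (Rabs (f x1) + Rabs (f x2)). split. assert (H3 := Rabs_pos (f x1)). assert (H4 := Rabs_pos (f x2)). lra.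
  intros x. destruct (archimed x) as [Hu1 Hu2].
  set (y := x - IZR (up x) + 1).
  assert (Hy : 0 <= y <= 1) by (unfold y; lra).
  assert (E : f x = f y).
  { unfold y. replace (x - IZR (up x) + 1) with (x + IZR (1 - up x)) by (rewrite minus_IZR; simpl; ring).
    rewrite per_Z; auto. }
  rewrite E. specialize (H1 y Hy). specialize (H2 y Hy).
  assert (H3 := Rle_abs (f x1)). assert (H4 := Rle_abs (- f x2)). rewrite Rabs_Ropp in H4.
  assert (H5 := Rabs_pos (f x1)). assert (H6 := Rabs_pos (f x2)).
  apply Rabs_le; lra.
Qed.

Lemma Derive_per f : smooth f -> periodic1 f -> periodic1 (Derive f).
Proof. intros Hs Hp x.
  assert (H1 : ex_derive f (x + 1)) by exact (Hs 1%nat (x + 1)).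
  assert (H := is_derive_comp f (fun y => y + 1) x _ 1 (Derive_correct _ _ H1)).
  assert (H2 : is_derive (fun y => y + 1) x 1) by (auto_derive; auto; ring).
  specialize (H H2). apply (is_derive_ext _ f) in H; [|intros; apply Hp].
  apply is_derive_unique in H. rewrite H. unfold scal; simpl; unfold mult; simpl; ring.
Qed.

Lemma smooth_cont f : smooth f -> forall x, continuity_pt f x.
Proof. intros Hs x. apply continuity_pt_filterlim. apply (@ex_derive_continuous R_AbsRing R_NormedModule).
  exact (Hs 1%nat x). Qed.

Lemma smooth_lip f : smooth f -> periodic1 f -> exists K, 0 <= K /\ forall x y, Rabs (f x - f y) <= K * Rabs (x - y).
Proof. intros Hs Hp.
  assert (Hc : forall x, continuity_pt (Derive f) x).
  { intros x. apply continuity_pt_filterlim. apply (@ex_derive_continuous R_AbsRing R_NormedModule).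
    exact (Hs 2%nat x). }
  destruct (bounded_per _ Hc (Derive_per f Hs Hp)) as [K [HK HKb]].
  exists K. split; auto. intros x y.
  destruct (MVT_gen f y x (Derive f)) as [z [_ Hz]].
  - intros; apply Derive_correct. exact (Hs 1%nat x0).
  - intros; apply smooth_cont; auto.
  - rewrite Hz. rewrite Rabs_mult. apply Rmult_le_compat_r. apply Rabs_pos. auto.
Qed.

Fixpoint hstep (t0 : R) (vs : list (R * R)) (s : R) : R * R :=
  match vs with
  | nil => (0, 0)
  | v :: vs' => if Rlt_dec s (t0 + 1) then v else hstep (t0 + 1) vs' s
  end.

Lemma hstep_bound vs : exists H, 0 <= H /\ forall t0 s, Rabs (fst (hstep t0 vs s)) <= H /\ Rabs (snd (hstep t0 vs s)) <= H.
Proof. induction vs as [|v vs IH].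
  - exists 0. split. lra. intros; simpl. rewrite Rabs_R0. lra.
  - destruct IH as [H [H0 IH]]. exists (H + Rabs (fst v) + Rabs (snd v)).
    assert (A1 := Rabs_pos (fst v)). assert (A2 := Rabs_pos (snd v)).
    split. lra. intros t0 s. simpl. destruct Rlt_dec. lra. specialize (IH (t0 + 1) s). lra.
Qed.

Section Drift.
Variables (c sigma : R) (a : R -> R) (b : Z -> R -> R).
Hypothesis Hsigma : 0 < sigma.
Hypothesis Ha : smooth a.
Hypothesis Hap : periodic1 a.
Hypothesis Hb : forall k : Z, smooth (b k).
Hypothesis Hbp : forall k : Z, periodic1 (b k).
Hypothesis Hcorr : smooth (corr b).

Definition F0 y := c + sigma ^ 2 * (a y - / 2 * corr b y).

Lemma corr_per : periodic1 (corr b).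
Proof using Hb Hbp. intros x. unfold corr, sum_Z. f_equal; apply Series_ext; intros n;
  rewrite (Derive_per _ (Hb _) (Hbp _)), Hbp; auto. Qed.

Lemma F0_facts : exists MF KF, 0 <= MF /\ 0 <= KF /\ (forall y, Rabs (F0 y) <= MF) /\
  (forall y z, Rabs (F0 y - F0 z) <= KF * Rabs (y - z)).
Proof.
  assert (Hc : forall x, continuity_pt F0 x).
  { intros x. apply continuity_pt_filterlim. apply (@ex_derive_continuous R_AbsRing R_NormedModule).
    unfold F0. auto_derive. split. exact (Ha 1%nat x). split. exact (Hcorr 1%nat x). auto. }
  assert (Hp : periodic1 F0) by (intros x; unfold F0; rewrite Hap, corr_per; auto).
  destruct (bounded_per _ Hc Hp) as [MF [HMF HMFb]].
  destruct (smooth_lip a Ha Hap) as [Ka [HKa HKab]].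
  destruct (smooth_lip _ Hcorr corr_per) as [Kc [HKc HKcb]].
  exists MF, (sigma ^ 2 * (Ka + / 2 * Kc)). repeat split; auto.
  apply Rmult_le_pos. apply pow_le; lra. lra.
  intros y z. unfold F0.
  replace (c + sigma ^ 2 * (a y - / 2 * corr b y) - (c + sigma ^ 2 * (a z - / 2 * corr b z))) with
    (sigma ^ 2 * ((a y - a z) - / 2 * (corr b y - corr b z))) by ring.
  rewrite Rabs_mult. rewrite (Rabs_pos_eq (sigma ^ 2)) by (apply pow_le; lra). rewrite Rmult_assoc.
  apply Rmult_le_compat_l. apply pow_le; lra.
  unfold Rminus at 1. eapply Rle_trans. apply Rabs_triang. rewrite Rabs_Ropp, Rabs_mult, (Rabs_pos_eq (/2)) by lra.
  specialize (HKab y z). specialize (HKcb y z). nra.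
Qed.

Definition drv (h : R -> R * R) := fun s y => drift c sigma a b h s y.

Lemma drift_eq h s y : drift c sigma a b h s y = F0 y + sigma * (b 1%Z y * fst (h s) + b (-1)%Z y * snd (h s)).
Proof using. reflexivity. Qed.

Lemma drift_facts vs t0 : exists K M, 1 <= K /\ 0 <= M /\
  (forall s y z, Rabs (drv (hstep t0 vs) s y - drv (hstep t0 vs) s z) <= K * Rabs (y - z)) /\
  (forall s y, Rabs (drv (hstep t0 vs) s y) <= M).
Proof.
  destruct F0_facts as [MF [KF [HMF [HKF [HF0 HF0L]]]]].
  destruct (hstep_bound vs) as [H [HH0 HH]].
  destruct (smooth_lip _ (Hb 1%Z) (Hbp 1%Z)) as [K1 [HK1 HK1b]].
  destruct (smooth_lip _ (Hb (-1)%Z) (Hbp (-1)%Z)) as [K2 [HK2 HK2b]].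
  destruct (bounded_per _ (smooth_cont _ (Hb 1%Z)) (Hbp 1%Z)) as [M1 [HM1 HM1b]].
  destruct (bounded_per _ (smooth_cont _ (Hb (-1)%Z)) (Hbp (-1)%Z)) as [M2 [HM2 HM2b]].
  exists (1 + KF + sigma * (K1 * H + K2 * H)), (MF + sigma * (M1 * H + M2 * H)).
  split. assert (0 <= sigma * (K1 * H + K2 * H)) by (apply Rmult_le_pos; nra). lra.
  split. assert (0 <= sigma * (M1 * H + M2 * H)) by (apply Rmult_le_pos; nra). lra.
  split.
  - intros s y z. unfold drv. rewrite !drift_eq. destruct (HH t0 s) as [Hf Hs].
    set (u := fst (hstep t0 vs s)) in *. set (w := snd (hstep t0 vs s)) in *.
    replace (F0 y + sigma * (b 1%Z y * u + b (-1)%Z y * w) - (F0 z + sigma * (b 1%Z z * u + b (-1)%Z z * w)))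
      with ((F0 y - F0 z) + sigma * ((b 1%Z y - b 1%Z z) * u + (b (-1)%Z y - b (-1)%Z z) * w)) by ring.
    eapply Rle_trans. apply Rabs_triang. rewrite Rabs_mult, (Rabs_pos_eq sigma) by lra.
    eapply Rle_trans. apply Rplus_le_compat. apply HF0L. apply Rmult_le_compat_l. lra.
    eapply Rle_trans. apply Rabs_triang. rewrite !Rabs_mult. apply Rplus_le_compat.
    apply Rmult_le_compat; try apply Rabs_pos. apply HK1b. exact Hf.
    apply Rmult_le_compat; try apply Rabs_pos. apply HK2b. exact Hs.
    assert (0 <= Rabs (y - z)) by apply Rabs_pos. nra.
  - intros s y. unfold drv. rewrite drift_eq. destruct (HH t0 s) as [Hf Hs].
    eapply Rle_trans. apply Rabs_triang. rewrite Rabs_mult, (Rabs_pos_eq sigma) by lra.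
    apply Rplus_le_compat. auto. apply Rmult_le_compat_l. lra.
    eapply Rle_trans. apply Rabs_triang. rewrite !Rabs_mult. apply Rplus_le_compat.
    apply Rmult_le_compat; try apply Rabs_pos; auto. apply Rmult_le_compat; try apply Rabs_pos; auto.
Qed.

Lemma drift_cont_const v (y : R -> R) : continuity y -> forall z,
  continuous (fun s => F0 (y s) + sigma * (b 1%Z (y s) * fst v + b (-1)%Z (y s) * snd v)) z.
Proof. intros Hy z.
  apply (continuous_comp y (fun w => F0 w + sigma * (b 1%Z w * fst v + b (-1)%Z w * snd v))).
  apply continuity_pt_filterlim; auto.
  apply (@ex_derive_continuous R_AbsRing R_NormedModule). unfold F0. auto_derive.
  repeat split. exact (Ha 1%nat _). exact (Hcorr 1%nat _). exact (Hb 1%Z 1%nat _). exact (Hb (-1)%Z 1%nat _).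
Qed.

Lemma hstep_int vs : forall t0 y, continuity y -> forall p q, p <= q ->
  ex_RInt (fun s => drv (hstep t0 vs) s (y s)) p q.
Proof. induction vs as [|v vs IH]; intros t0 y Hy p q Hpq.
  - apply (ex_RInt_ext (fun s => F0 (y s) + sigma * (b 1%Z (y s) * fst (0,0) + b (-1)%Z (y s) * snd (0,0)))).
    intros; reflexivity. apply (ex_RInt_continuous (V:=R_CompleteNormedModule)). intros; apply drift_cont_const; auto.
  - assert (Hlo : forall p q, p <= q -> q <= t0 + 1 -> ex_RInt (fun s => drv (hstep t0 (v :: vs)) s (y s)) p q).
    { intros p' q' H1 H2. apply (ex_RInt_ext (fun s => F0 (y s) + sigma * (b 1%Z (y s) * fst v + b (-1)%Z (y s) * snd v))).
      intros x Hx. rewrite Rmin_left, Rmax_right in Hx by lra. unfold drv. rewrite drift_eq. simpl.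
      destruct Rlt_dec; [reflexivity|lra].
      apply (ex_RInt_continuous (V:=R_CompleteNormedModule)). intros; apply drift_cont_const; auto. }
    assert (Hhi : forall p q, t0 + 1 <= p -> p <= q -> ex_RInt (fun s => drv (hstep t0 (v :: vs)) s (y s)) p q).
    { intros p' q' H1 H2. apply (ex_RInt_ext (fun s => drv (hstep (t0 + 1) vs) s (y s))).
      intros x Hx. rewrite Rmin_left, Rmax_right in Hx by lra. unfold drv. rewrite !drift_eq. simpl.
      destruct Rlt_dec; [lra|reflexivity].
      apply IH; auto. }
    destruct (Rle_dec q (t0 + 1)). apply Hlo; auto.
    destruct (Rle_dec (t0 + 1) p). apply Hhi; lra.
    apply ex_RInt_Chasles with (t0 + 1). apply Hlo; lra. apply Hhi; lra.
Qed.

End Drift.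


Lemma sin_lb d x : 0 < d -> d <= x -> x <= 1/2 - d -> sin (2 * PI * d) <= sin (2 * PI * x).
Proof. intros Hd H1 H2. assert (HP := PI_RGT_0).
  destruct (Rle_dec (2 * PI * x) (PI / 2)).
  - apply sin_incr_1; nra.
  - rewrite <- (sin_PI_x (2 * PI * x)). apply sin_incr_1; nra.
Qed.

Lemma sin_pos d : 0 < d -> d <= 1/4 -> 0 < sin (2 * PI * d).
Proof. intros. assert (HP := PI_RGT_0). apply sin_gt_0; nra. Qed.

Lemma sin_half_plus d : sin (2 * PI * (1/2 + d)) = - sin (2 * PI * d).
Proof. rewrite <- neg_sin. f_equal. field. Qed.

Lemma sin_mhalf_minus d : sin (2 * PI * (- (1/2) - d)) = sin (2 * PI * d).
Proof. replace (2 * PI * (- (1/2) - d)) with (- (2 * PI * d + PI)) by field.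
  rewrite sin_neg, neg_sin. ring. Qed.

Lemma sin_neg2 x : sin (2 * PI * x) = - sin (2 * PI * (- x)).
Proof. replace (2 * PI * (- x)) with (- (2 * PI * x)) by ring. rewrite sin_neg. ring. Qed.

Lemma sin_shift y m k : sin (2 * PI * (y - (m + INR k))) = sin (2 * PI * (y - m)).
Proof. rewrite <- (sin_period (2 * PI * (y - (m + INR k))) k). f_equal. ring. Qed.

Section Phase.
Variables (c sigma : R) (a : R -> R) (b : Z -> R -> R).
Hypothesis Hsigma : 0 < sigma.
Hypothesis Ha : smooth a.
Hypothesis Hap : periodic1 a.
Hypothesis Hb : forall k : Z, smooth (b k).
Hypothesis Hbp : forall k : Z, periodic1 (b k).
Hypothesis Hcorr : smooth (corr b).
Hypothesis Hspan2 : forall L eta : R, exists l1 l2 : R,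
      forall x : R, l1 * b 1%Z x + l2 * b (-1)%Z x = L * sin (2 * PI * x + eta).

Notation F0 := (F0 c sigma a b).
Notation drv := (drv c sigma a b).

Lemma ctrl A m : exists v : R * R, forall y, sigma * (b 1%Z y * fst v + b (-1)%Z y * snd v) = A * sin (2 * PI * (y - m)).
Proof. destruct (Hspan2 A (- (2 * PI * m))) as [l1 [l2 H]]. exists (l1 / sigma, l2 / sigma). intros y. simpl.
  replace (2 * PI * (y - m)) with (2 * PI * y + - (2 * PI * m)) by ring. rewrite <- H. field. lra. Qed.

Lemma shift_sol h x g : solF (drv h) x g -> solF (drv h) (x + 1) (fun t => g t + 1).
Proof. intros Hg t Ht. replace (g t + 1 - (x + 1)) with (g t - x) by ring.
  apply (is_RInt_ext (fun s => drv h s (g s))); [|apply Hg; auto].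
  intros s _. unfold drv, Defs.drift. rewrite Hap, (corr_per b Hb Hbp), !Hbp. reflexivity. Qed.

Lemma phase_ok_of h K M x g t0 v A m : 1 <= K -> 0 <= M ->
  (forall s y z, Rabs (drv h s y - drv h s z) <= K * Rabs (y - z)) ->
  (forall s y, Rabs (drv h s y) <= M) -> solF (drv h) x g -> 0 <= t0 ->
  (forall s, t0 <= s < t0 + 1 -> h s = v) ->
  (forall y, sigma * (b 1%Z y * fst v + b (-1)%Z y * snd v) = A * sin (2 * PI * (y - m))) ->
  phase_ok (fun y => F0 y + A * sin (2 * PI * (y - m))) K g (M + 1) t0 (t0 + 1).
Proof. intros HK HM HL HB Hg Ht0 Hh Hv.
  assert (EG : forall s y, t0 <= s < t0 + 1 -> drv h s y = F0 y + A * sin (2 * PI * (y - m))).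
  { intros s y Hs. unfold drv. rewrite drift_eq. rewrite Hh by auto. rewrite Hv. reflexivity. }
  repeat split; try lra.
  - intros y z. rewrite <- !(EG t0) by lra. apply HL.
  - intros s s' Hs Hs'. eapply Rle_trans. apply (sol_lip _ M HB x g Hg); lra.
    assert (0 <= Rabs (s - s')) by apply Rabs_pos. nra.
  - intros p q Hp Hq. assert (H := RI_sub _ _ _ _ _ (Hg p ltac:(lra)) (Hg q ltac:(lra))).
    replace (g q - x - (g p - x)) with (g q - g p) in H by ring.
    apply (is_RInt_ext (fun s => drv h s (g s))); auto.
    intros s Hs. rewrite Rmin_left, Rmax_right in Hs by lra. apply EG. lra.
Qed.

Lemma phase_up h K M x g t0 v A m d del MF : 1 <= K -> 0 <= M ->
  (forall s y z, Rabs (drv h s y - drv h s z) <= K * Rabs (y - z)) ->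
  (forall s y, Rabs (drv h s y) <= M) -> solF (drv h) x g -> 0 <= t0 ->
  (forall s, t0 <= s < t0 + 1 -> h s = v) ->
  (forall y, sigma * (b 1%Z y * fst v + b (-1)%Z y * snd v) = A * sin (2 * PI * (y - m))) ->
  (forall y, Rabs (F0 y) <= MF) -> 0 < d -> d <= del -> del <= 1/16 ->
  MF + 1 <= A * sin (2 * PI * d) -> MF + 1 <= A * sin (2 * PI * del) ->
  d <= g t0 - m <= 1/2 + del -> 1/2 - del <= g (t0 + 1) - m <= 1/2 + del.
Proof. intros HK HM HL HB Hg Ht0 Hh Hv HF Hd1 Hd2 Hd3 HA1 HA2 Hg0.
  assert (Hok := phase_ok_of h K M x g t0 v A m HK HM HL HB Hg Ht0 Hh Hv).
  assert (Hsd : 0 < sin (2 * PI * d)) by (apply sin_pos; lra).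
  assert (HMF : 0 <= MF). { assert (Hx := HF 0). assert (Hy := Rabs_pos (F0 0)). lra. }
  assert (HA : 0 <= A) by (destruct (Rle_dec 0 A); auto; nra).
  destruct (capture_up _ _ _ _ _ _ (m + d) (m + 1/2 - del) (m + 1/2 + del) Hok); try lra.
  - intros y Hy. specialize (HF y). apply Rabs_le_between in HF.
    assert (sin (2 * PI * d) <= sin (2 * PI * (y - m))) by (apply sin_lb; lra). nra.
  - replace (m + 1/2 + del - m) with (1/2 + del) by ring. rewrite sin_half_plus.
    specialize (HF (m + 1/2 + del)). apply Rabs_le_between in HF. lra.
Qed.

Lemma phase_down h K M x g t0 v A m d del MF : 1 <= K -> 0 <= M ->
  (forall s y z, Rabs (drv h s y - drv h s z) <= K * Rabs (y - z)) ->
  (forall s y, Rabs (drv h s y) <= M) -> solF (drv h) x g -> 0 <= t0 ->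
  (forall s, t0 <= s < t0 + 1 -> h s = v) ->
  (forall y, sigma * (b 1%Z y * fst v + b (-1)%Z y * snd v) = A * sin (2 * PI * (y - m))) ->
  (forall y, Rabs (F0 y) <= MF) -> 0 < d -> d <= del -> del <= 1/16 ->
  MF + 1 <= A * sin (2 * PI * d) -> MF + 1 <= A * sin (2 * PI * del) ->
  - (1/2) - del <= g t0 - m <= - d -> - (1/2) - del <= g (t0 + 1) - m <= - (1/2) + del.
Proof. intros HK HM HL HB Hg Ht0 Hh Hv HF Hd1 Hd2 Hd3 HA1 HA2 Hg0.
  assert (Hok := phase_ok_of h K M x g t0 v A m HK HM HL HB Hg Ht0 Hh Hv).
  assert (Hsd : 0 < sin (2 * PI * d)) by (apply sin_pos; lra).
  assert (HMF : 0 <= MF). { assert (Hx := HF 0). assert (Hy := Rabs_pos (F0 0)). lra. }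
  assert (HA : 0 <= A) by (destruct (Rle_dec 0 A); auto; nra).
  destruct (capture_down _ _ _ _ _ _ (m - d) (m - 1/2 + del) (m - 1/2 - del) Hok); try lra.
  - intros y Hy. specialize (HF y). apply Rabs_le_between in HF.
    rewrite sin_neg2.
    assert (sin (2 * PI * d) <= sin (2 * PI * (- (y - m)))) by (apply sin_lb; lra). nra.
  - replace (m - 1/2 - del - m) with (- (1/2) - del) by ring. rewrite sin_mhalf_minus.
    specialize (HF (m - 1/2 - del)). apply Rabs_le_between in HF. lra.
Qed.

End Phase.


Lemma transfer c sigma a b (h1 h2 : R -> R * R) K M tau x g u : 1 <= K -> 0 <= M ->
  (forall s y z, Rabs (drv c sigma a b h1 s y - drv c sigma a b h1 s z) <= K * Rabs (y - z)) ->
  (forall s y, Rabs (drv c sigma a b h1 s y) <= M) -> 0 <= tau ->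
  (forall s, s < tau -> h1 s = h2 s) ->
  solF (drv c sigma a b h1) x u -> solF (drv c sigma a b h2) x g -> u tau = g tau.
Proof. intros HK HM HL HB Ht Hh Hu Hg.
  apply (uniq_fwd _ K M HK HM HL HB tau x u g); [intros; apply Hu; lra| |lra].
  intros t Ht'. apply (is_RInt_ext (fun s => drv c sigma a b h2 s (g s))); [|apply Hg; lra].
  intros s Hs. rewrite Rmin_left, Rmax_right in Hs by lra. unfold drv, drift. rewrite Hh by lra. reflexivity.
Qed.

Lemma step_sys c sigma a b (Hsigma : 0 < sigma) (Ha : smooth a) (Hap : periodic1 a)
  (Hb : forall k : Z, smooth (b k)) (Hbp : forall k : Z, periodic1 (b k)) (Hcorr : smooth (corr b)) vs :
  exists K M, 1 <= K /\ 0 <= M /\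
  (forall s y z, Rabs (drv c sigma a b (hstep 0 vs) s y - drv c sigma a b (hstep 0 vs) s z) <= K * Rabs (y - z)) /\
  (forall s y, Rabs (drv c sigma a b (hstep 0 vs) s y) <= M) /\
  (forall x, exists g, g 0 = x /\ solF (drv c sigma a b (hstep 0 vs)) x g).
Proof. destruct (drift_facts c sigma a b Hsigma Ha Hap Hb Hbp Hcorr vs 0) as [K [M [HK [HM [HL HB]]]]].
  exists K, M. repeat split; auto. intros x. apply (exists_sol _ K M HK HM HL HB).
  intros y Hy t Ht. apply (hstep_int c sigma a b Hsigma Ha Hap Hb Hbp Hcorr vs 0 y Hy 0 t Ht).
Qed.


Theorem lemma4p14
  (c sigma : R) (a : R -> R) (b : Z -> R -> R)
  (Hsigma : 0 < sigma)
  (Ha : smooth a) (Hap : periodic1 a)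
  (Hb : forall k : Z, smooth (b k)) (Hbp : forall k : Z, periodic1 (b k))
  (Hsum : forall x : R, summable_Z (fun k => Derive (b k) x * b k x))
  (Hcorr : smooth (corr b))
  (Hspan1 : forall l1 l2 : R, exists L eta : R,
      forall x : R, l1 * b 1%Z x + l2 * b (-1)%Z x = L * sin (2 * PI * x + eta))
  (Hspan2 : forall L eta : R, exists l1 l2 : R,
      forall x : R, l1 * b 1%Z x + l2 * b (-1)%Z x = L * sin (2 * PI * x + eta)) :
  let z1 := 0 in let z2 := 1 / 3 in let z3 := - (1 / 3) in
  forall eps : R, 0 < eps ->
  exists (T : R) (h : R -> R * R),
    0 < T /\ in_H h /\
    (exists g1 g2 g3 : R -> R,
        is_sol c sigma a b h z1 g1 /\ is_sol c sigma a b h z2 g2 /\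
        is_sol c sigma a b h z3 g3) /\
    (forall g1 g2 g3 : R -> R,
        is_sol c sigma a b h z1 g1 -> is_sol c sigma a b h z2 g2 ->
        is_sol c sigma a b h z3 g3 ->
        (z1 - eps <= g3 T /\ g3 T < g2 T /\ g2 T <= z1 + eps) /\
        (z2 - eps <= g1 (3 * T) /\ g1 (3 * T) < g3 (3 * T) + 1 /\
           g3 (3 * T) + 1 <= z2 + eps) /\
        (z3 - eps <= g2 (5 * T) - 1 /\ g2 (5 * T) - 1 < g1 (5 * T) /\
           g1 (5 * T) <= z3 + eps)).
Proof.
  intros z1 z2 z3 eps Heps. subst z1 z2 z3.
  destruct (F0_facts c sigma a b Hsigma Ha Hap Hb Hbp Hcorr) as [MF [KF [HMF [HKF [HF0 _]]]]].
  pose proof (ctrl c sigma a b Hsigma Ha Hap Hb Hbp Hcorr Hspan2) as CT.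
  pose proof (phase_up c sigma a b Hsigma Ha Hap Hb Hbp Hcorr Hspan2) as PU.
  pose proof (phase_down c sigma a b Hsigma Ha Hap Hb Hbp Hcorr Hspan2) as PD.
  pose proof (shift_sol c sigma a b Hsigma Ha Hap Hb Hbp Hcorr Hspan2) as SH.
  pose proof (step_sys c sigma a b Hsigma Ha Hap Hb Hbp Hcorr) as SS.
  set (del := Rmin eps (1/16)).
  assert (Hd0 : 0 < del) by (unfold del, Rmin; destruct Rle_dec; lra).
  assert (Hd1 : del <= eps) by (unfold del; apply Rmin_l).
  assert (Hd2 : del <= 1/16) by (unfold del; apply Rmin_r).
  assert (Hs1 : 0 < sin (2 * PI * del)) by (apply sin_pos; lra).
  set (A1 := (MF + 1) / sin (2 * PI * del)).
  assert (HA1 : MF + 1 <= A1 * sin (2 * PI * del)) by (unfold A1; right; field; lra).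
  set (Aof := fun d => (MF + 1) / sin (2 * PI * d) + (MF + 1) / sin (2 * PI * del)).
  assert (Ampl : forall d, 0 < d -> d <= del -> MF + 1 <= Aof d * sin (2 * PI * d) /\ MF + 1 <= Aof d * sin (2 * PI * del)).
  { intros d Hd Hdd. assert (Hsd : 0 < sin (2 * PI * d)) by (apply sin_pos; lra). unfold Aof. split.
    - rewrite Rmult_plus_distr_r. unfold Rdiv. rewrite Rmult_assoc, Rinv_l by lra.
      assert (0 <= (MF + 1) * / sin (2 * PI * del) * sin (2 * PI * d)).
      { apply Rmult_le_pos; [|lra]. apply Rmult_le_pos. lra. left; apply Rinv_0_lt_compat; lra. } lra.
    - rewrite Rmult_plus_distr_r. unfold Rdiv. rewrite (Rmult_assoc (MF + 1) (/ sin (2 * PI * del))), Rinv_l by lra.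
      assert (0 <= (MF + 1) * / sin (2 * PI * d) * sin (2 * PI * del)).
      { apply Rmult_le_pos; [|lra]. apply Rmult_le_pos. lra. left; apply Rinv_0_lt_compat; lra. } lra. }
  clearbody Aof.
  assert (E1 : INR 1 = 1) by reflexivity.
  destruct (CT A1 (- (1/2))) as [v1 Hv1].
  assert (Hv1' : forall y, sigma * (b 1%Z y * fst v1 + b (-1)%Z y * snd v1) = A1 * sin (2 * PI * (y - (- (1/2) + INR 1)))).
  { intros y. rewrite sin_shift. apply Hv1. }
  rewrite E1 in Hv1'.
  set (hA := hstep 0 (v1 :: nil)).
  destruct (SS (v1 :: nil)) as [KA [MA [HKA [HMA [HLA [HBA ExA]]]]]].
  destruct (ExA 0) as [uA1 [_ HuA1]]. destruct (ExA (- (1/3))) as [uA3 [_ HuA3]].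
  set (m := (uA1 1 + uA3 1) / 2). set (gam := (uA1 1 - uA3 1) / 2).
  destruct (CT (Aof gam) m) as [v2a Hv2a].
  destruct (CT A1 (- (1/6))) as [v2b Hv2b].
  assert (Hv2b' : forall y, sigma * (b 1%Z y * fst v2b + b (-1)%Z y * snd v2b) = A1 * sin (2 * PI * (y - (- (1/6) + INR 1)))).
  { intros y. rewrite sin_shift. apply Hv2b. }
  rewrite E1 in Hv2b'.
  set (hB := hstep 0 (v1 :: v2a :: v2b :: nil)).
  destruct (SS (v1 :: v2a :: v2b :: nil)) as [KB [MB [HKB [HMB [HLB [HBB ExB]]]]]].
  destruct (ExB 0) as [uB1 [_ HuB1]]. destruct (ExB (1/3)) as [uB2 [_ HuB2]].
  set (m' := (uB1 3 + uB2 3) / 2). set (gam2 := (uB2 3 - uB1 3) / 2).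
  destruct (CT (Aof gam2) m') as [v3a Hv3a].
  destruct (CT A1 (1/6)) as [v3b Hv3b].
  assert (Hv3b' : forall y, sigma * (b 1%Z y * fst v3b + b (-1)%Z y * snd v3b) = A1 * sin (2 * PI * (y - (1/6 + INR 1)))).
  { intros y. rewrite sin_shift. apply Hv3b. }
  rewrite E1 in Hv3b'.
  set (h := hstep 0 (v1 :: v2a :: v2b :: v3a :: v3b :: nil)).
  destruct (SS (v1 :: v2a :: v2b :: v3a :: v3b :: nil)) as [K [M [HK [HM [HL [HB Ex]]]]]].
  fold h in HL, HB, Ex.
  assert (Hh1 : forall s, 0 <= s < 0 + 1 -> h s = v1) by (intros s Hs; unfold h; simpl; repeat (destruct Rlt_dec; try lra); reflexivity).
  assert (Hh2 : forall s, 1 <= s < 1 + 1 -> h s = v2a) by (intros s Hs; unfold h; simpl; repeat (destruct Rlt_dec; try lra); reflexivity).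
  assert (Hh3 : forall s, 2 <= s < 2 + 1 -> h s = v2b) by (intros s Hs; unfold h; simpl; repeat (destruct Rlt_dec; try lra); reflexivity).
  assert (Hh4 : forall s, 3 <= s < 3 + 1 -> h s = v3a) by (intros s Hs; unfold h; simpl; repeat (destruct Rlt_dec; try lra); reflexivity).
  assert (Hh5 : forall s, 4 <= s < 4 + 1 -> h s = v3b) by (intros s Hs; unfold h; simpl; repeat (destruct Rlt_dec; try lra); reflexivity).
  assert (HhA : forall s, s < 1 -> hA s = h s) by (intros s Hs; unfold h, hA; simpl; repeat (destruct Rlt_dec; try lra); reflexivity).
  assert (HhB : forall s, s < 3 -> hB s = h s) by (intros s Hs; unfold h, hB; simpl; repeat (destruct Rlt_dec; try lra); reflexivity).
  set (S := drv c sigma a b h).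
  assert (Ord : forall g1 g2 g3, solF S 0 g1 -> solF S (1/3) g2 -> solF S (- (1/3)) g3 ->
     forall t, 0 <= t -> g3 t < g1 t /\ g1 t < g2 t /\ g2 t < g3 t + 1 /\ g2 t < g1 t + 1).
  { intros g1 g2 g3 H1 H2 H3 t Ht.
    assert (H3' := SH h _ _ H3). assert (H1' := SH h _ _ H1).
    repeat split.
    - apply (order_sol S K M HK HM HL HB _ _ g3 g1 H3 H1); lra.
    - apply (order_sol S K M HK HM HL HB _ _ g1 g2 H1 H2); lra.
    - apply (order_sol S K M HK HM HL HB _ _ g2 _ H2 H3'); lra.
    - apply (order_sol S K M HK HM HL HB _ _ g2 _ H2 H1'); lra. }
  assert (TA1 : forall g, solF S 0 g -> g 1 = uA1 1).
  { intros g Hg. symmetry. apply (transfer c sigma a b hA h KA MA 1 0 g uA1 HKA HMA HLA HBA ltac:(lra) HhA HuA1 Hg). }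
  assert (TA3 : forall g, solF S (- (1/3)) g -> g 1 = uA3 1).
  { intros g Hg. symmetry. apply (transfer c sigma a b hA h KA MA 1 _ g uA3 HKA HMA HLA HBA ltac:(lra) HhA HuA3 Hg). }
  assert (TB1 : forall g, solF S 0 g -> g 3 = uB1 3).
  { intros g Hg. symmetry. apply (transfer c sigma a b hB h KB MB 3 0 g uB1 HKB HMB HLB HBB ltac:(lra) HhB HuB1 Hg). }
  assert (TB2 : forall g, solF S (1/3) g -> g 3 = uB2 3).
  { intros g Hg. symmetry. apply (transfer c sigma a b hB h KB MB 3 _ g uB2 HKB HMB HLB HBB ltac:(lra) HhB HuB2 Hg). }
  assert (P1a : forall g, solF S 0 g -> - del <= g 1 <= del).
  { intros g Hg. assert (H0 := sol_0 _ _ _ Hg).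
    assert (H := PD h K M 0 g 0 v1 A1 (- (1/2) + 1) del del MF HK HM HL HB Hg ltac:(lra) Hh1 Hv1' HF0 Hd0 ltac:(lra) Hd2 HA1 HA1 ltac:(lra)).
    replace (0 + 1) with 1 in H by ring. lra. }
  assert (P1b : forall g, solF S (1/3) g -> - del <= g 1 <= del).
  { intros g Hg. assert (H0 := sol_0 _ _ _ Hg).
    assert (H := PD h K M _ g 0 v1 A1 (- (1/2) + 1) del del MF HK HM HL HB Hg ltac:(lra) Hh1 Hv1' HF0 Hd0 ltac:(lra) Hd2 HA1 HA1 ltac:(lra)).
    replace (0 + 1) with 1 in H by ring. lra. }
  assert (P1c : forall g, solF S (- (1/3)) g -> - del <= g 1 <= del).
  { intros g Hg. assert (H0 := sol_0 _ _ _ Hg).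
    assert (H := PU h K M _ g 0 v1 A1 (- (1/2)) del del MF HK HM HL HB Hg ltac:(lra) Hh1 Hv1 HF0 Hd0 ltac:(lra) Hd2 HA1 HA1 ltac:(lra)).
    replace (0 + 1) with 1 in H by ring. lra. }
  destruct (Ex 0) as [G1 [_ HG1]]. destruct (Ex (1/3)) as [G2 [_ HG2]]. destruct (Ex (- (1/3))) as [G3 [_ HG3]].
  assert (HO := Ord G1 G2 G3 HG1 HG2 HG3).
  assert (Hgam : 0 < gam <= del /\ - del <= m <= del).
  { assert (E1' := TA1 G1 HG1). assert (E3' := TA3 G3 HG3). assert (Q1 := P1a G1 HG1). assert (Q3 := P1c G3 HG3).
    destruct (HO 1 ltac:(lra)) as [O1 _]. unfold gam, m. lra. }
  destruct (Ampl gam ltac:(lra) ltac:(lra)) as [HAg1 HAg2].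
  assert (P2a : forall g, solF S 0 g -> 1/3 - del <= g 3 <= 1/3 + del).
  { intros g Hg. assert (E := TA1 g Hg).
    assert (H := PU h K M _ g 1 v2a (Aof gam) m gam del MF HK HM HL HB Hg ltac:(lra) Hh2 Hv2a HF0 ltac:(lra) ltac:(lra) Hd2 HAg1 HAg2 ltac:(unfold gam, m in *; lra)).
    replace (1 + 1) with 2 in H by ring.
    assert (H' := PD h K M _ g 2 v2b A1 (- (1/6) + 1) del del MF HK HM HL HB Hg ltac:(lra) Hh3 Hv2b' HF0 Hd0 ltac:(lra) Hd2 HA1 HA1 ltac:(lra)).
    replace (2 + 1) with 3 in H' by ring. lra. }
  assert (P2c : forall g, solF S (- (1/3)) g -> - (2/3) - del <= g 3 <= - (2/3) + del).
  { intros g Hg. assert (E := TA3 g Hg).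
    assert (H := PD h K M _ g 1 v2a (Aof gam) m gam del MF HK HM HL HB Hg ltac:(lra) Hh2 Hv2a HF0 ltac:(lra) ltac:(lra) Hd2 HAg1 HAg2 ltac:(unfold gam, m in *; lra)).
    replace (1 + 1) with 2 in H by ring.
    assert (H' := PD h K M _ g 2 v2b A1 (- (1/6)) del del MF HK HM HL HB Hg ltac:(lra) Hh3 Hv2b HF0 Hd0 ltac:(lra) Hd2 HA1 HA1 ltac:(lra)).
    replace (2 + 1) with 3 in H' by ring. lra. }
  assert (Hgam2 : 0 < gam2 <= del /\ 1/3 - del <= m' <= 1/3 + del).
  { assert (E1' := TB1 G1 HG1). assert (E2' := TB2 G2 HG2). assert (Q1 := P2a G1 HG1). assert (Q3 := P2c G3 HG3).
    destruct (HO 3 ltac:(lra)) as [O1 [O2 [O3 _]]]. unfold gam2, m'. lra. }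
  destruct (Ampl gam2 ltac:(lra) ltac:(lra)) as [HAh1 HAh2].
  assert (P3a : forall g, solF S 0 g -> - (1/3) - del <= g 5 <= - (1/3) + del).
  { intros g Hg. assert (E := TB1 g Hg).
    assert (H := PD h K M _ g 3 v3a (Aof gam2) m' gam2 del MF HK HM HL HB Hg ltac:(lra) Hh4 Hv3a HF0 ltac:(lra) ltac:(lra) Hd2 HAh1 HAh2 ltac:(unfold gam2, m' in *; lra)).
    replace (3 + 1) with 4 in H by ring.
    assert (H' := PD h K M _ g 4 v3b A1 (1/6) del del MF HK HM HL HB Hg ltac:(lra) Hh5 Hv3b HF0 Hd0 ltac:(lra) Hd2 HA1 HA1 ltac:(lra)).
    replace (4 + 1) with 5 in H' by ring. lra. }
  assert (P3b : forall g, solF S (1/3) g -> - (1/3) - del <= g 5 - 1 <= - (1/3) + del).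
  { intros g Hg. assert (E := TB2 g Hg).
    assert (H := PU h K M _ g 3 v3a (Aof gam2) m' gam2 del MF HK HM HL HB Hg ltac:(lra) Hh4 Hv3a HF0 ltac:(lra) ltac:(lra) Hd2 HAh1 HAh2 ltac:(unfold gam2, m' in *; lra)).
    replace (3 + 1) with 4 in H by ring.
    assert (H' := PD h K M _ g 4 v3b A1 (1/6 + 1) del del MF HK HM HL HB Hg ltac:(lra) Hh5 Hv3b' HF0 Hd0 ltac:(lra) Hd2 HA1 HA1 ltac:(lra)).
    replace (4 + 1) with 5 in H' by ring. lra. }
  exists 1, h. split; [lra|]. split.
  {
    exists 5%nat, INR, (fun i => List.nth i (v1 :: v2a :: v2b :: v3a :: v3b :: nil) (0, 0)).
    split. reflexivity. split.
    - intros i Hi. apply lt_INR. lia.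
    - intros s Hs. split.
      + intros i Hi Hsi. destruct i as [|[|[|[|[|i]]]]]; simpl in Hsi |- *;
          try (unfold h; simpl; repeat (destruct Rlt_dec; try lra); reflexivity). lia.
      + intros H5. simpl in H5. unfold h; simpl; repeat (destruct Rlt_dec; try lra); reflexivity. }
  split.
  { exists G1, G2, G3. split; [|split].
    split; [exact (sol_0 _ _ _ HG1)|exact HG1].
    split; [exact (sol_0 _ _ _ HG2)|exact HG2].
    split; [exact (sol_0 _ _ _ HG3)|exact HG3]. }
  intros g1 g2 g3 [_ H1] [_ H2] [_ H3].
  change (solF S 0 g1) in H1. change (solF S (1/3) g2) in H2. change (solF S (- (1/3)) g3) in H3.
  replace (3 * 1) with 3 by ring. replace (5 * 1) with 5 by ring.
  assert (O1 := Ord g1 g2 g3 H1 H2 H3 1 ltac:(lra)).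
  assert (O3 := Ord g1 g2 g3 H1 H2 H3 3 ltac:(lra)).
  assert (O5 := Ord g1 g2 g3 H1 H2 H3 5 ltac:(lra)).
  assert (Q1 := P1b g2 H2). assert (Q2 := P1c g3 H3).
  assert (Q3 := P2a g1 H1). assert (Q4 := P2c g3 H3).
  assert (Q5 := P3a g1 H1). assert (Q6 := P3b g2 H2).
  repeat split; lra.
Qed.
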